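(* For every positive integer $k$, the binary word $w_k=a^kba^kba^{2k}$ (of length $4k+2$) contains exactly $k+\left(\lfloor k/2\rfloor+1\right)^2+(k+1)\lceil k/2\rceil$ distinct abelian squares as factors. Consequently, the maximum number of distinct abelian square factors of a binary word of length $4k+2$ is at least $k+\left(\lfloor k/2\rfloor+1\right)^2+(k+1)\lceil k/2\rceil$.
   Context: For a word $u$ over $\{a,b\}$ and a letter $c$, $|u|_c$ is the number of occurrences of $c$ in $u$, and the Parikh vector of $u$ is $\mathcal{P}(u)=[|u|_a,|u|_b]$. A nonempty word $uv$ is an abelian square if $\mathcal{P}(u)=\mathcal{P}(v)$ (so $|u|=|v|\ge 1$). The number of distinct abelian squares in $w$ is the number of distinct words (as strings) that occur as factors (contiguous subwords) of $w$ and are abelian squares. $a^m$ denotes $m$ consecutive copies of the letter $a$. *)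

(* Defs.v *)
From mathcomp Require Import all_boot.
Set Implicit Arguments. Unset Strict Implicit. Unset Printing Implicit Defensive.

Definition la : bool := false.
Definition lb : bool := true.

Definition occ (c : bool) (u : seq bool) : nat := count (pred1 c) u.

Definition parikh (u : seq bool) : nat * nat := (occ la u, occ lb u).

Definition abelian_square (x : seq bool) : bool :=
  has (fun i => (0 < i) && (parikh (take i x) == parikh (drop i x)))
      (iota 0 (size x).+1).

Definition factors (w : seq bool) : seq (seq bool) :=
  undup [seq take j (drop i w) | i <- iota 0 (size w).+1, j <- iota 0 (size w).+1].

Definition num_abelian_squares (w : seq bool) : nat :=
  size [seq x <- factors w | abelian_square x].

Definition wk (k : nat) : seq bool :=
  nseq k la ++ [:: lb] ++ nseq k la ++ [:: lb] ++ nseq (2 * k) la.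

(* Main.v *)
Require Import Defs.
From mathcomp Require Import all_boot.
From mathcomp Require Import zify.

Definition C (k n : nat) : nat :=
  (if k < n then 1 else 0) + (if 2 * k + 1 < n then 1 else 0).

Lemma wk_eq k : wk k = nseq k false ++ true :: nseq k false ++ true :: nseq (2 * k) false.
Proof. by []. Qed.

Lemma size_wk k : size (wk k) = 4 * k + 2.
Proof. rewrite wk_eq !size_cat /= !size_cat /= !size_nseq; lia. Qed.

Lemma cnt_nseq n : count id (nseq n false) = 0.
Proof. by elim: n. Qed.

Lemma cnt_take0 n (s : seq bool) : count id s = 0 -> count id (take n s) = 0.
Proof. move=> H; rewrite -(cat_take_drop n s) count_cat in H; lia. Qed.

Lemma cnt_take_pref n m r :
  count id (take n (nseq m false ++ r)) = count id (take (n - m) r).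
Proof.
rewrite take_cat size_nseq; case: ltnP => H.
  have -> : n - m = 0 by lia.
  by rewrite take0 cnt_take0 // cnt_nseq.
by rewrite count_cat cnt_nseq.
Qed.

Lemma cnt_take_true n r :
  count id (take n (true :: r)) = (if 0 < n then 1 else 0) + count id (take n.-1 r).
Proof. by case: n => [|n] /=; rewrite ?take0. Qed.

Lemma C_prefix k n : count id (take n (wk k)) = C k n.
Proof.
rewrite wk_eq cnt_take_pref cnt_take_true cnt_take_pref cnt_take_true (cnt_take0 _ _ (cnt_nseq _)).

rewrite /C; repeat (case: ifP => ?); lia.
Qed.

Lemma seg_count k s h : count id (take h (drop s (wk k))) = C k (s + h) - C k s.
Proof. by rewrite -!C_prefix takeD count_cat addKn. Qed.

Lemma take_size_take (T : Type) l (s : seq T) : take (size (take l s)) s = take l s.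
Proof.
rewrite size_take; case: ltnP => H //.
by rewrite take_size take_oversize.
Qed.

Lemma occ_lb x : occ lb x = count id x.
Proof. by apply: eq_count => b; case: b. Qed.

Lemma occ_la x : occ la x = size x - count id x.
Proof. rewrite -(count_predC id x) addKn. by apply: eq_count => b; case: b. Qed.

Lemma abelianP x : abelian_square x <->
  exists h, [/\ 0 < h, size x = 2 * h & count id (take h x) = count id (drop h x)].
Proof.
rewrite /abelian_square; split.
  move/hasP=> [h]; rewrite mem_iota => /andP[_ Hh] /andP[h0 /eqP].
  rewrite /parikh !occ_la !occ_lb => [[E1 E2]]; exists h; split => //.
  have c1 := count_size id (take h x).
  have c2 := count_size id (drop h x).
  move: E1 c1 c2; rewrite E2 size_take size_drop; case: ifP => ?; lia.
move=> [h [h0 Hs Hc]]; apply/hasP; exists h.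
  rewrite mem_iota; lia.
rewrite h0 /parikh !occ_la !occ_lb /=.
have -> : size (take h x) = size (drop h x).
  rewrite size_take size_drop; case: ifP => ?; lia.
by rewrite Hc.
Qed.

Lemma factorsP w x : x \in factors w <->
  exists s l, [/\ s <= size w, l <= size w & x = take l (drop s w)].
Proof.
rewrite /factors mem_undup; split.
  move/allpairsP => [[s l] [Hs Hl ->]]; rewrite !mem_iota /= in Hs Hl.
  exists s, l; split => //; lia.
move=> [s [l [Hs Hl ->]]]; apply/allpairsP; exists (s, l); split => //;
  by rewrite mem_iota /= ltnS.
Qed.

Lemma seg_half k s h :
  count id (take h (take (2 * h) (drop s (wk k)))) = C k (s + h) - C k s /\
  count id (drop h (take (2 * h) (drop s (wk k)))) = C k (s + 2 * h) - C k (s + h).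
Proof.
split.
  rewrite take_takel; [exact: seg_count | lia].
have -> : drop h (take (2 * h) (drop s (wk k))) = take h (drop h (drop s (wk k))).
  rewrite [in RHS]take_drop; congr (drop _ (take _ _)); lia.
rewrite drop_drop seg_count.
have -> : h + s + h = s + 2 * h by lia.
by rewrite (addnC h s).
Qed.

Lemma size_seg k s l : s + l <= 4 * k + 2 -> size (take l (drop s (wk k))) = l.
Proof. move=> H; rewrite size_take size_drop size_wk; case: ifP => ?; lia. Qed.

Lemma cnt0_nseq x : count id x = 0 -> x = nseq (size x) false.
Proof.
elim: x => [|b x IH] //=; case: b => //= H.
congr (_ :: _); exact: IH.
Qed.

Lemma classify k s h : 0 < h -> s + 2 * h <= 4 * k + 2 ->
  C k (s + h) - C k s = C k (s + 2 * h) - C k (s + h) ->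
  (C k (s + 2 * h) - C k s = 0 /\ h <= k) \/
  (s <= k /\ k < s + h /\ s + h <= 2 * k + 1 /\ 2 * k + 2 <= s + 2 * h).
Proof. move=> h0 hs; rewrite /C; repeat (case: ifP => ?); lia. Qed.

Lemma AS_seg k s h : 0 < h -> s + 2 * h <= 4 * k + 2 ->
  C k (s + h) - C k s = C k (s + 2 * h) - C k (s + h) ->
  abelian_square (take (2 * h) (drop s (wk k))).
Proof.
move=> h0 hs E; apply/abelianP; exists h; split => //.
  exact: size_seg.
by have [-> ->] := seg_half k s h.
Qed.

Definition E1 (m : nat) : seq bool := nseq (2 * m) false.
Definition E2 k i t : seq bool := take (2 * i + 2 * k + 2 - 2 * t) (drop (k - i) (wk k)).
Definition T1 k := [seq E1 m | m <- iota 1 k].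
Definition T2 k := [seq E2 k i t | i <- iota 0 k.+1, t <- iota 0 ((i + k)./2).+1].
Definition TT k := T1 k ++ T2 k.

Lemma memT k x : (x \in factors (wk k)) && abelian_square x = (x \in TT k).
Proof.
apply/idP/idP.
  move=> /andP[/factorsP [s [l [Hs Hl Ex]]] /abelianP [h [h0 Hsz Hc]]].
  rewrite size_wk in Hs Hl.
  have Hsh : s + 2 * h <= 4 * k + 2.
    have := size_drop s (wk k); rewrite size_wk -Hsz Ex => E.
    have := size_take l (drop s (wk k)); rewrite E; case: ifP => ?; lia.
  have Ex2 : x = take (2 * h) (drop s (wk k)).
    by rewrite -Hsz Ex take_size_take.
  rewrite Ex2 in Hc; have [H1 H2] := seg_half k s h; rewrite H1 H2 in Hc.
  case: (classify k s h h0 Hsh Hc) => [[H0 Hhk]|[Ha [Hb [Hc' Hd]]]].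
    have Hx : count id x = 0 by rewrite Ex2 seg_count.
    rewrite (cnt0_nseq _ Hx) Hsz mem_cat; apply/orP; left.
    apply/mapP; exists h => //; rewrite mem_iota; lia.
  rewrite mem_cat; apply/orP; right; apply/allpairsPdep.
  exists (k - s), (2 * k + 1 - s - h); split.
  - rewrite mem_iota; lia.
  - rewrite mem_iota; lia.
  - rewrite Ex2 /E2; congr (take _ (drop _ _)); lia.
rewrite mem_cat => /orP[/mapP [m Hm ->]|/allpairsPdep [i [t [Hi Ht ->]]]].
  rewrite mem_iota in Hm.
  have Hx : E1 m = take (2 * m) (drop (2 * k + 2) (wk k)).
    have Hsz : size (take (2 * m) (drop (2 * k + 2) (wk k))) = 2 * m.
      apply: size_seg; lia.
    rewrite /E1 -{1}Hsz -cnt0_nseq // seg_count /C.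
    repeat (case: ifP => ?); lia.
  rewrite Hx; apply/andP; split.
    apply/factorsP; exists (2 * k + 2), (2 * m); rewrite size_wk; split => //; lia.
  apply: AS_seg; try lia.
  rewrite /C; repeat (case: ifP => ?); lia.
rewrite mem_iota in Hi; rewrite mem_iota in Ht.
have Hx : E2 k i t = take (2 * (i + k + 1 - t)) (drop (k - i) (wk k)).
  rewrite /E2; congr (take _ (drop _ _)); lia.
apply/andP; split.
  apply/factorsP; exists (k - i), (2 * i + 2 * k + 2 - 2 * t); rewrite size_wk;
    split => //; lia.
rewrite Hx; apply: AS_seg; try lia.
rewrite /C; repeat (case: ifP => ?); lia.
Qed.

Lemma size_E2 k i t : i <= k -> 2 * t <= i + k -> size (E2 k i t) = 2 * i + 2 * k + 2 - 2 * t.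
Proof. move=> *; apply: size_seg; lia. Qed.

Lemma cnt_pref_E2 k i t j : i <= k -> 2 * t <= i + k -> j <= k + 2 ->
  count id (take j (E2 k i t)) = C k (k - i + j) - C k (k - i).
Proof. move=> *; rewrite /E2 take_takel ?seg_count //; lia. Qed.

Lemma E2_inj k i1 t1 i2 t2 : i1 <= k -> 2 * t1 <= i1 + k -> i2 <= k -> 2 * t2 <= i2 + k ->
  E2 k i1 t1 = E2 k i2 t2 -> i1 = i2 /\ t1 = t2.
Proof.
move=> H1 H2 H3 H4 E.
have S := congr1 size E; rewrite !size_E2 // in S.
case: (ltngtP i1 i2) => Hi.
- have := congr1 (fun x => count id (take i1.+1 x)) E.
  rewrite /= !cnt_pref_E2 //; try lia.
  rewrite /C; repeat (case: ifP => ?); lia.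
- have := congr1 (fun x => count id (take i2.+1 x)) E.
  rewrite /= !cnt_pref_E2 //; try lia.
  rewrite /C; repeat (case: ifP => ?); lia.
- subst; split => //; lia.
Qed.

Lemma uniq_TT k : uniq (TT k).
Proof.
rewrite /TT cat_uniq; apply/and3P; split.
- rewrite map_inj_uniq ?iota_uniq // => m1 m2 E.
  have := congr1 size E; rewrite /E1 !size_nseq; lia.
- apply/hasPn => x /allpairsPdep [i [t [Hi Ht ->]]].
  rewrite mem_iota in Hi; rewrite mem_iota in Ht.
  apply/negP => /mapP [m _ E].
  have := congr1 (count id) E; rewrite /E1 cnt_nseq /E2 seg_count /C.
  repeat (case: ifP => ?); lia.
- apply: allpairs_uniq_dep.
  + exact: iota_uniq.
  + move=> i _; exact: iota_uniq.
  + move=> [i1 t1] [i2 t2] /allpairsPdep [a1 [b1 [Ha1 Hb1 E1']]]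
      /allpairsPdep [a2 [b2 [Ha2 Hb2 E2']]] /= E.
    have e1 := congr1 (fun p : {x : nat & nat} => (tag p, tagged p)) E1'.
    have e2 := congr1 (fun p : {x : nat & nat} => (tag p, tagged p)) E2'.
    case: e1 => ? ?; case: e2 => ? ?; subst.
    rewrite !mem_iota in Ha1 Hb1 Ha2 Hb2.
    have [-> ->] := E2_inj k a1 b1 a2 b2 ltac:(lia) ltac:(lia) ltac:(lia) ltac:(lia) E.
    by [].
Qed.

Definition S (n : nat) := sumn [seq (t./2).+1 | t <- iota 0 n].

Lemma S_rec n : S n.+1 = S n + (n./2).+1.
Proof. by rewrite /S -addn1 iotaD map_cat sumn_cat /= addn0. Qed.

Lemma S_form n : S (2 * n) = n * (n + 1) /\ S (2 * n + 1) = (n + 1) ^ 2.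
Proof.
elim: n => [|n [IH1 IH2]]; first by [].
have E1 : S (2 * n.+1) = S (2 * n + 1) + n.+1.
  have -> : 2 * n.+1 = (2 * n + 1).+1 by lia.
  rewrite S_rec; congr (_ + _); lia.
have E2 : S (2 * n.+1 + 1) = S (2 * n.+1) + n.+2.
  rewrite addn1 S_rec; congr (_ + _); lia.
rewrite E2 E1 IH2; split; nia.
Qed.

Lemma sum_shift k : sumn [seq ((i + k)./2).+1 | i <- iota 0 k.+1] = S (k + k.+1) - S k.
Proof.
rewrite /S iotaD map_cat sumn_cat addKn add0n.
have -> : iota k k.+1 = map (addn k) (iota 0 k.+1) by rewrite -iotaDl addn0.
rewrite -map_comp.
by apply: congr1; apply: eq_map => i /=; rewrite addnC.
Qed.

Lemma sum_form k : sumn [seq ((i + k)./2).+1 | i <- iota 0 k.+1] =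
  (k./2 + 1) ^ 2 + (k + 1) * uphalf k.
Proof.
rewrite sum_shift.
have [n [Hn|Hn]] : exists n, k = 2 * n \/ k = 2 * n + 1 by exists k./2; lia.
- subst k.
  have -> : 2 * n + (2 * n).+1 = 2 * (2 * n) + 1 by lia.
  have [_ -> ] := S_form (2 * n); have [-> _] := S_form n.
  have -> : (2 * n)./2 = n by lia.
  have -> : uphalf (2 * n) = n by lia.
  nia.
- subst k.
  have -> : 2 * n + 1 + (2 * n + 1).+1 = 2 * (2 * n + 1) + 1 by lia.
  have [_ -> ] := S_form (2 * n + 1); have [_ -> ] := S_form n.
  have -> : (2 * n + 1)./2 = n by lia.
  have -> : uphalf (2 * n + 1) = n + 1 by lia.
  nia.
Qed.

Lemma size_TT k : size (TT k) = k + sumn [seq ((i + k)./2).+1 | i <- iota 0 k.+1].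
Proof.
rewrite /TT size_cat size_map size_iota size_allpairs_dep; congr (_ + _).
by congr sumn; apply: eq_map => i; rewrite size_iota.
Qed.

Lemma num_wk k : num_abelian_squares (wk k) = size (TT k).
Proof.
apply: perm_size; apply: uniq_perm.
- apply: filter_uniq; exact: undup_uniq.
- exact: uniq_TT.
- by move=> x; rewrite mem_filter andbC memT.
Qed.

Theorem mainTheorem3 (k : nat) (hk : 0 < k) :
  size (wk k) = 4 * k + 2 /\
  num_abelian_squares (wk k) = k + (k./2 + 1) ^ 2 + (k + 1) * uphalf k /\
  k + (k./2 + 1) ^ 2 + (k + 1) * uphalf k
    <= \max_(w : (4 * k + 2).-tuple bool) num_abelian_squares w.
Proof.
have Hn : num_abelian_squares (wk k) = k + (k./2 + 1) ^ 2 + (k + 1) * uphalf k.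
  by rewrite num_wk size_TT sum_form addnA.
split; first exact: size_wk.
split => //.
have Hs : size (wk k) == 4 * k + 2 by rewrite size_wk.
rewrite -Hn.
have L := @leq_bigmax _ (fun w : (4 * k + 2).-tuple bool => num_abelian_squares w) (Tuple Hs).
exact: L.
Qed.
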